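(* Let $M$ be a compact Polish metric space, let $\bar a=(a_0,\dots,a_{p-1})$ and $\bar b=(b_0,\dots,b_{p-1})$ be tuples from $M$, and let $(A_n:n\in\omega)$ be a sequence of finite subsets of $M$ with $A_n\subseteq A_{n+1}$ and $\bigcup_{z\in A_n}B_{2^{-n}}(z)=M$ for all $n$. Suppose $(\varphi_n:n\in\omega)$ is a compact approximation system for $M,\bar a,\bar b$ with respect to $(A_n:n\in\omega)$. Then there is a bijective isometry $\Phi:M\to M$ with $\Phi(a_i)=b_i$ for all $i<p$.
   Context: $B_r(z)$ denotes the open ball of radius $r$ about $z$. A compact approximation system for $M,\bar a,\bar b$ with respect to $(A_n)$ is a sequence $(\varphi_n:n\in\omega)$ such that for every $n$: (i) $\varphi_n:A_n\to A_n$; (ii) for all $i<p$ and $z\in A_n$, $|d(a_i,z)-d(b_i,\varphi_n(z))|<2^{-n}$; (iii) for all $m\le n$, $y\in A_m$, $z\in A_n$, $|d(y,z)-d(\varphi_m(y),\varphi_n(z))|<2^{-m}+2^{-n}$; (iv) $\bigcup_{z\in A_n}B_{2^{-(n-1)}}(\varphi_n(z))=M$. *)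

(* Defs.v *)
From Stdlib Require Import Reals Lra Lia List.
Open Scope R_scope.

Definition is_metric {M : Type} (d : M -> M -> R) : Prop :=
  (forall x y, 0 <= d x y) /\
  (forall x y, d x y = 0 <-> x = y) /\
  (forall x y, d x y = d y x) /\
  (forall x y z, d x z <= d x y + d y z).

Definition ball_d {M : Type} (d : M -> M -> R) (z : M) (r : R) (y : M) : Prop :=
  d z y < r.

Definition open_d {M : Type} (d : M -> M -> R) (U : M -> Prop) : Prop :=
  forall x, U x -> exists r, 0 < r /\ forall y, ball_d d x r y -> U y.

Definition compact_d {M : Type} (d : M -> M -> R) : Prop :=
  forall (I : Type) (U : I -> M -> Prop),
    (forall i, open_d d (U i)) ->
    (forall x, exists i, U i x) ->
    exists l : list I, forall x, exists i, In i l /\ U i x.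

(* Compact approximation system (phi_n) for M, a, b w.r.t. (A_n);
   tuples a, b of length p are given as functions nat -> M used at i < p;
   2^{-n} is written / 2 ^ n and 2^{-(n-1)} as 2 / 2 ^ n. *)
Definition compact_approx_system {M : Type} (d : M -> M -> R) (p : nat)
  (a b : nat -> M) (A : nat -> list M) (phi : nat -> M -> M) : Prop :=
  (* (i) *)
  (forall n z, In z (A n) -> In (phi n z) (A n)) /\
  (* (ii) *)
  (forall n i z, (i < p)%nat -> In z (A n) ->
     Rabs (d (a i) z - d (b i) (phi n z)) < / 2 ^ n) /\
  (* (iii) *)
  (forall m n y z, (m <= n)%nat -> In y (A m) -> In z (A n) ->
     Rabs (d y z - d (phi m y) (phi n z)) < / 2 ^ m + / 2 ^ n) /\
  (* (iv) *)
  (forall n x, exists z, In z (A n) /\ ball_d d (phi n z) (2 / 2 ^ n) x).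

(* Main.v *)
Require Import Defs.
From Stdlib Require Import Reals List Lra Lia Classical ClassicalEpsilon.
Open Scope R_scope.

Lemma inv2_pos n : 0 < / 2 ^ n.
Proof. apply Rinv_0_lt_compat, pow_lt; lra. Qed.

Lemma inv2_mono m n : (m <= n)%nat -> / 2 ^ n <= / 2 ^ m.
Proof. intro H. apply Rinv_le_contravar. apply pow_lt; lra. apply Rle_pow; [lra|exact H]. Qed.

Lemma pow2_ge n : INR n <= 2 ^ n.
Proof.
  induction n as [|n IH]. simpl; lra.
  rewrite S_INR. simpl. pose proof (pow_R1_Rle 2 n ltac:(lra)). lra.
Qed.

Lemma inv2_small eps : 0 < eps -> exists N, / 2 ^ N < eps.
Proof.
  intro He. destruct (INR_unbounded (/ eps)) as [N HN]. exists N.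
  pose proof (pow2_ge N). pose proof (Rinv_0_lt_compat eps He).
  rewrite <- (Rinv_inv eps). apply Rinv_lt_contravar.
  apply Rmult_lt_0_compat; [lra | apply pow_lt; lra]. lra.
Qed.

Lemma choice1 {X Y : Type} (P : X -> Y -> Prop) :
  (forall x, exists y, P x y) -> exists f : X -> Y, forall x, P x (f x).
Proof.
  intro H. exists (fun x => proj1_sig (constructive_indefinite_description _ (H x))).
  intro x. exact (proj2_sig (constructive_indefinite_description _ (H x))).
Qed.

Lemma choice2 {X Y Z : Type} (P : X -> Y -> Z -> Prop) :
  (forall x y, exists z, P x y z) -> exists f : X -> Y -> Z, forall x y, P x y (f x y).
Proof.
  intro H. exists (fun x y => proj1_sig (constructive_indefinite_description _ (H x y))).
  intros x y. exact (proj2_sig (constructive_indefinite_description _ (H x y))).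
Qed.

Lemma in_le_list_max l N : In N l -> (N <= list_max l)%nat.
Proof.
  intro H. assert (H2 := proj1 (list_max_le l (list_max l)) (le_n _)).
  rewrite Forall_forall in H2. auto.
Qed.

Section S.
Variable M : Type.
Variable d : M -> M -> R.
Hypothesis Hmet : is_metric d.

Lemma d_pos x y : 0 <= d x y. Proof. apply Hmet. Qed.
Lemma d_sym x y : d x y = d y x. Proof. apply Hmet. Qed.
Lemma d_tri x y z : d x z <= d x y + d y z. Proof. apply Hmet. Qed.
Lemma d_refl x : d x x = 0. Proof. apply Hmet. reflexivity. Qed.
Lemma d_eq x y : d x y = 0 -> x = y. Proof. apply Hmet. Qed.

Definition cauchy (x : nat -> M) := forall eps, 0 < eps -> exists N,
  forall n m, (N <= n)%nat -> (N <= m)%nat -> d (x n) (x m) < eps.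
Definition conv (x : nat -> M) L := forall eps, 0 < eps -> exists N,
  forall n, (N <= n)%nat -> d (x n) L < eps.

Lemma complete (x : nat -> M) : compact_d d -> cauchy x -> exists L, conv x L.
Proof.
  intros Hcomp Hc. apply NNPP; intro Hno.
  set (U := fun N y => exists eps, 0 < eps /\ forall n, (N <= n)%nat -> eps < d (x n) y).
  destruct (Hcomp nat U) as [l Hl].
  - intros N y [eps [He Hy]]. exists (eps/2). split. lra.
    intros z Hz. unfold ball_d in Hz. exists (eps/2). split. lra.
    intros n Hn. specialize (Hy n Hn). pose proof (d_tri (x n) z y).
    rewrite (d_sym z y) in H. lra.
  - intro y. apply NNPP; intro Hny. apply Hno. exists y.
    intros eps He. destruct (Hc (eps/2) ltac:(lra)) as [N HN]. exists N.
    assert (Hex : exists n, (N <= n)%nat /\ d (x n) y <= eps/2).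
    { apply NNPP; intro H1. apply Hny. exists N. exists (eps/2). split. lra.
      intros n Hn. apply Rnot_le_lt. intro H2. apply H1. exists n. auto. }
    destruct Hex as [n [Hn Hd]]. intros m Hm.
    pose proof (d_tri (x m) (x n) y). pose proof (HN m n Hm Hn). lra.
  - destruct (Hl (x (list_max l))) as [N [HN [eps [He Hy]]]].
    specialize (Hy (list_max l) (in_le_list_max l N HN)).
    rewrite d_refl in Hy. lra.
Qed.

Lemma cauchy_of_bound (x : nat -> M) C : 0 < C ->
  (forall m n, (m <= n)%nat -> d (x m) (x n) <= C * / 2 ^ m) -> cauchy x.
Proof.
  intros HC H eps He. destruct (inv2_small (eps / C)) as [N HN].
  apply Rdiv_lt_0_compat; lra.
  exists N. intros n m Hn Hm.
  assert (Hk : forall a b, (N <= a)%nat -> (a <= b)%nat -> d (x a) (x b) < eps).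
  { intros a b Ha Hab. pose proof (H a b Hab). pose proof (inv2_mono _ _ Ha).
    assert (C * / 2 ^ a <= C * / 2 ^ N) by (apply Rmult_le_compat_l; lra).
    assert (C * / 2 ^ N < C * (eps / C)) by (apply Rmult_lt_compat_l; lra).
    replace (C * (eps / C)) with eps in H3 by (field; lra). lra. }
  destruct (Nat.le_ge_cases n m). auto. rewrite d_sym. auto.
Qed.

End S.
Lemma A_mono (M : Type) (A : nat -> list M) :
  (forall n x, In x (A n) -> In x (A (S n))) ->
  forall m n z, (m <= n)%nat -> In z (A m) -> In z (A n).
Proof. intros H m n z Hmn. induction Hmn; auto. Qed.

Theorem lemma3p2 (M : Type) (d : M -> M -> R) (p : nat) (a b : nat -> M)
  (A : nat -> list M) (phi : nat -> M -> M) :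
  is_metric d ->
  compact_d d ->
  (forall n x, In x (A n) -> In x (A (S n))) ->
  (forall n x, exists z, In z (A n) /\ ball_d d z (/ 2 ^ n) x) ->
  compact_approx_system d p a b A phi ->
  exists Phi : M -> M,
    (forall x y, Phi x = Phi y -> x = y) /\
    (forall y, exists x, Phi x = y) /\
    (forall x y, d (Phi x) (Phi y) = d x y) /\
    (forall i, (i < p)%nat -> Phi (a i) = b i).
Proof.
  intros Hmet Hcomp Hmono Hden [Hi [Hii [Hiii Hiv]]].
  pose proof (A_mono M A Hmono) as HAm.
  destruct (choice2 (fun n x z => In z (A n) /\ d z x < / 2 ^ n) Hden) as [zs Hzs].
  set (w := fun x n => phi n (zs n x)).
  assert (Hw : forall x m n, (m <= n)%nat -> d (w x m) (w x n) <= 4 * / 2 ^ m).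
  { intros x m n Hmn. destruct (Hzs m x) as [Hm1 Hm2]. destruct (Hzs n x) as [Hn1 Hn2].
    pose proof (Hiii m n (zs m x) (zs n x) Hmn (HAm m m _ (le_n _) Hm1) Hn1) as H.
    apply Rabs_def2 in H. pose proof (d_tri M d Hmet (zs m x) x (zs n x)).
    rewrite (d_sym M d Hmet x (zs n x)) in H0. pose proof (inv2_mono _ _ Hmn).
    unfold w. lra. }
  destruct (choice1 (fun x L => conv M d (w x) L)) as [Phi HPhi].
  { intro x. apply (complete M d Hmet); auto. apply (cauchy_of_bound M d Hmet _ 4). lra.
    auto. }
  assert (Hiso : forall x y, d (Phi x) (Phi y) = d x y).
  { intros x y.
    assert (Hk : forall n, d (w x n) (w y n) <= d x y + 4 * / 2 ^ n /\
                           d x y <= d (w x n) (w y n) + 4 * / 2 ^ n).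
    { intro n. destruct (Hzs n x) as [Hx1 Hx2]. destruct (Hzs n y) as [Hy1 Hy2].
      pose proof (Hiii n n _ _ (le_n _) Hx1 Hy1) as H. apply Rabs_def2 in H.
      pose proof (d_tri M d Hmet (zs n x) x (zs n y)).
      pose proof (d_tri M d Hmet x y (zs n y)).
      pose proof (d_tri M d Hmet x (zs n x) y).
      pose proof (d_tri M d Hmet (zs n x) (zs n y) y).
      rewrite (d_sym M d Hmet y (zs n y)) in *. rewrite (d_sym M d Hmet x (zs n x)) in *.
      unfold w. lra. }
    assert (He : forall eps, 0 < eps -> exists n, d (w x n) (Phi x) < eps /\
               d (w y n) (Phi y) < eps /\ 4 * / 2 ^ n < eps).
    { intros eps Heps. destruct (HPhi x eps Heps) as [N1 H1].
      destruct (HPhi y eps Heps) as [N2 H2]. destruct (inv2_small (eps/4)) as [N3 H3]. lra.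
      exists (N1 + N2 + N3)%nat. pose proof (inv2_mono N3 (N1+N2+N3) ltac:(lia)).
      split. apply H1; lia. split. apply H2; lia. lra. }
    apply Rle_antisym; apply Rle_plus_epsilon; intros eps Heps;
      destruct (He (eps/3) ltac:(lra)) as [n [Ha [Hb Hc]]]; destruct (Hk n) as [Hk1 Hk2];
      pose proof (d_tri M d Hmet (Phi x) (w x n) (Phi y));
      pose proof (d_tri M d Hmet (w x n) (w y n) (Phi y));
      pose proof (d_tri M d Hmet (w x n) (Phi x) (w y n));
      pose proof (d_tri M d Hmet (Phi x) (Phi y) (w y n));
      rewrite (d_sym M d Hmet (Phi x) (w x n)) in *;
      rewrite (d_sym M d Hmet (Phi y) (w y n)) in *; lra. }
  exists Phi. split; [|split; [|split]].
  - intros x y Hxy. apply (d_eq M d Hmet). rewrite <- Hiso, Hxy. apply (d_refl M d Hmet).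
  - intro y. destruct (choice1 (fun n z => In z (A n) /\ ball_d d (phi n z) (2 / 2 ^ n) y)
      (fun n => Hiv n y)) as [u Hu].
    unfold ball_d in Hu.
    assert (S1 : forall n, d (phi n (u n)) (Phi (u n)) <= / 2 ^ n).
    { intro n. apply Rle_plus_epsilon. intros eps Heps.
      destruct (HPhi (u n) (eps/2) ltac:(lra)) as [N1 H1].
      destruct (inv2_small (eps/4)) as [N3 H3]. lra.
      set (k := (n + N1 + N3)%nat). pose proof (inv2_mono N3 k ltac:(unfold k; lia)).
      specialize (H1 k ltac:(unfold k; lia)).
      destruct (Hzs k (u n)) as [Hz1 Hz2]. destruct (Hu n) as [Hu1 Hu2].
      pose proof (Hiii n k (u n) (zs k (u n)) ltac:(unfold k; lia) Hu1 Hz1) as Hq.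
      apply Rabs_def2 in Hq. rewrite (d_sym M d Hmet (u n)) in Hq.
      pose proof (d_tri M d Hmet (phi n (u n)) (w (u n) k) (Phi (u n))).
      unfold w in *. lra. }
    assert (S2 : forall n, d (Phi (u n)) y <= 3 * / 2 ^ n).
    { intro n. pose proof (S1 n). destruct (Hu n) as [_ Hu2].
      pose proof (d_tri M d Hmet (Phi (u n)) (phi n (u n)) y) as Ht.
      rewrite (d_sym M d Hmet (Phi (u n)) (phi n (u n))) in Ht. unfold Rdiv in Hu2. lra. }
    destruct (complete M d Hmet u Hcomp) as [x Hx].
    { apply (cauchy_of_bound M d Hmet _ 6). lra. intros m n Hmn.
      rewrite <- Hiso. pose proof (S2 m). pose proof (S2 n).
      pose proof (d_tri M d Hmet (Phi (u m)) y (Phi (u n))).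
      rewrite (d_sym M d Hmet y) in H1. pose proof (inv2_mono _ _ Hmn). lra. }
    exists x. apply (d_eq M d Hmet). apply Rle_antisym; [| apply (d_pos M d Hmet)].
    apply Rle_plus_epsilon. intros eps Heps.
    destruct (Hx (eps/2) ltac:(lra)) as [N1 H1].
    destruct (inv2_small (eps/6)) as [N3 H3]. lra.
    set (n := (N1 + N3)%nat). pose proof (inv2_mono N3 n ltac:(unfold n; lia)).
    specialize (H1 n ltac:(unfold n; lia)). pose proof (S2 n).
    pose proof (d_tri M d Hmet (Phi x) (Phi (u n)) y).
    rewrite Hiso, (d_sym M d Hmet x) in H2. lra.
  - exact Hiso.
  - intros i Hip. symmetry. apply (d_eq M d Hmet).
    apply Rle_antisym; [| apply (d_pos M d Hmet)].
    apply Rle_plus_epsilon. intros eps Heps.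
    destruct (HPhi (a i) (eps/2) ltac:(lra)) as [N1 H1].
    destruct (inv2_small (eps/4)) as [N3 H3]. lra.
    set (n := (N1 + N3)%nat). pose proof (inv2_mono N3 n ltac:(unfold n; lia)).
    specialize (H1 n ltac:(unfold n; lia)).
    destruct (Hzs n (a i)) as [Hz1 Hz2].
    pose proof (Hii n i _ Hip Hz1) as Hq. apply Rabs_def2 in Hq.
    rewrite (d_sym M d Hmet (a i)) in Hq.
    pose proof (d_tri M d Hmet (b i) (w (a i) n) (Phi (a i))).
    unfold w in *. lra.
Qed.
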